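(* Let $\langle A,f,g\rangle$ be a betweenness algebra and $a,b,c\in A$ with $0\notin\{a,b,c\}$ and $g(a,b)=1$. Then: (1) $|A|=2$ or $a\cdot b=0$; (2) $a$ and $b$ are atoms of $A$; (3) if $g(a,c)=1$, then $b=c$.
   Context: A PS-algebra is $\langle A,f,g\rangle$ where $A$ is a Boolean algebra with at least two elements (operations $+,\cdot,-,0,1$) and $f,g\colon A^2\to A$ satisfy: $f(x,y)=0$ whenever $x=0$ or $y=0$; $f$ is additive in each argument; $g(x,y)=1$ whenever $x=0$ or $y=0$; $g$ is co-additive in each argument ($g(x+x',y)=g(x,y)\cdot g(x',y)$, $g(x,y+y')=g(x,y)\cdot g(x,y')$). A betweenness algebra is a PS-algebra satisfying for all $x,y,z$: (ABT0) $x\leq f(x,x)$; (ABT1$_f$) $f(x,y)\leq f(y,x)$; (ABT1$_g$) $g(x,y)\leq g(y,x)$; (ABT2) $y\cdot f(x,z)\leq f(x\cdot f(x,y),z)$; (ABT3) $f(x,g(x,-y)\cdot y)\leq y$; (wMIA) if $x\neq0$ and $y\neq0$ then $g(x,y)\leq f(x,y)$. *)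

(* Defs.v *)
From mathcomp Require Import all_boot all_order.
Set Implicit Arguments. Unset Strict Implicit. Unset Printing Implicit Defensive.
Import Order.TTheory.
Local Open Scope order_scope.

(* A Boolean algebra is a complemented distributive lattice with top and
   bottom (ctbDistrLatticeType): + is `|`, . is `&`, - is ~`, 0 is \bot,
   1 is \top.  "At least two elements" is \bot <> \top. *)

Definition PS_algebra (d : Order.disp_t) (A : ctbDistrLatticeType d)
  (f g : A -> A -> A) : Prop :=
  (\bot : A) <> \top /\
      (forall x y, x = \bot \/ y = \bot -> f x y = \bot) /\
      (forall x x' y, f (x `|` x') y = f x y `|` f x' y) /\
      (forall x y y', f x (y `|` y') = f x y `|` f x y') /\
      (forall x y, x = \bot \/ y = \bot -> g x y = \top) /\
      (forall x x' y, g (x `|` x') y = g x y `&` g x' y) /\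
      (forall x y y', g x (y `|` y') = g x y `&` g x y').

Definition betweenness_algebra (d : Order.disp_t) (A : ctbDistrLatticeType d)
  (f g : A -> A -> A) : Prop :=
  PS_algebra f g /\
      (forall x, x <= f x x) /\
      (forall x y, f x y <= f y x) /\
      (forall x y, g x y <= g y x) /\
      (forall x y z, y `&` f x z <= f (x `&` f x y) z) /\
      (forall x y, f x (g x (~` y) `&` y) <= y) /\
      (forall x y, x <> \bot -> y <> \bot -> g x y <= f x y).

Definition has_two_elements (T : Type) : Prop :=
  exists x y : T, x <> y /\ forall z : T, z = x \/ z = y.

Definition atom (d : Order.disp_t) (A : ctbDistrLatticeType d) (x : A) : Prop :=
  x <> \bot /\ forall y : A, y <= x -> y = \bot \/ y = x.

(* Main.v *)
Require Import Defs.
From mathcomp Require Import all_boot all_order.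
Import Order.TTheory Order.Theory.
Local Open Scope order_scope.

Section Aux.
Variables (d : Order.disp_t) (A : ctbDistrLatticeType d) (f g : A -> A -> A).
Hypothesis H : betweenness_algebra f g.

Lemma g_top_le (a y z : A) : z <= y -> g a y = \top -> g a z = \top.
Proof.
case: H => [[_ [_ [_ [_ [_ [_ gR]]]]]] _] zy gy.
by move: (gR a z y); rewrite (join_r zy) gy meetx1 => <-.
Qed.

Lemma f_mono (a y z : A) : z <= y -> f a z <= f a y.
Proof.
case: H => [[_ [_ [_ [fR _]]]] _] zy.
by rewrite -(join_r zy) fR leUl.
Qed.

Lemma le_of_disj (b z : A) : b `&` ~` z = \bot -> b <= z.
Proof.
move=> e; have : b = b `&` z.
  by rewrite -[LHS]meetx1 -(joinxC z) meetUr e joinx0.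
by move=> ->; apply: leIr.
Qed.

Lemma atom_b (a b : A) : a <> \bot -> b <> \bot -> g a b = \top -> atom b.
Proof.
move=> a0 b0 gab; split => // z zb.
case: H => [[_ [_ [_ [fR _]]]] [_ [_ [_ [_ [abt3 wmia]]]]]].
have gaz : g a z = \top by exact: (@g_top_le _ _ _ zb gab).
case: (boolP (b `&` ~` z == \bot)) => [/eqP e|ne]; first by right; apply/eqP; rewrite eq_le zb le_of_disj.
left.
have h3 := abt3 a (~` z); rewrite complK gaz meet1x in h3.
have gbz : g a (b `&` ~` z) = \top by apply: (@g_top_le _ _ _ _ gab); apply: leIl.
have hw := wmia a (b `&` ~` z) a0 (fun e => ltac:(by move: ne; rewrite e eqxx)).
rewrite gbz in hw.
have : f a (b `&` ~` z) <= f a (~` z) by apply: (@f_mono _ _ _); apply: leIr.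
move=> h; have t : ~` z = \top.
  by apply/eqP; rewrite -le1x (le_trans hw (le_trans h h3)).
by rewrite -[z]complK t compl1.
Qed.
End Aux.

Theorem theorem29 (d : Order.disp_t) (A : ctbDistrLatticeType d)
  (f g : A -> A -> A) (a b c : A) :
  betweenness_algebra f g ->
  a <> \bot -> b <> \bot -> c <> \bot ->
  g a b = \top ->
  [/\ has_two_elements A \/ a `&` b = \bot,
      atom a /\ atom b &
      (g a c = \top -> b = c)].
Proof.
move=> H a0 b0 c0 gab.
have HH := H.
case: HH => [[bt [f0 [fL [fR [g0 [gL gR]]]]]] [abt0 [f1 [g1 [abt2 [abt3 wmia]]]]]].
have gba : g b a = \top by apply/eqP; rewrite -le1x -gab g1.
have atb := @atom_b _ _ _ _ H _ _ a0 b0 gab.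
have ata := @atom_b _ _ _ _ H _ _ b0 a0 gba.
split => //.
- case: (boolP (a `&` b == \bot)) => [/eqP -> | ne]; first by right.
  left.
  have eab : a = b.
    case: ata => _ /(_ (a `&` b) (leIl _ _)) [e|ea]; first by move: ne; rewrite e eqxx.
    case: atb => _ /(_ (a `&` b) (leIr _ _)) [e|eb]; first by move: ne; rewrite e eqxx.
    by rewrite -ea eb.
  subst b.
  have faa : f a a = \top.
    by apply/eqP; rewrite -le1x -gab wmia.
  have h3 := abt3 a (~` a); rewrite complK gab meet1x in h3.
  have h2 := abt2 a (~` a) a; rewrite faa meetx1 in h2.
  have e0 : a `&` f a (~` a) = \bot.
    by apply/eqP; rewrite -lex0 -(meetxC a) leI2.
  rewrite e0 f0 in h2; last by left.
  have at1 : a = \top.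
    by rewrite -[a]complK; apply/eqP; rewrite -compl0 (inj_eq compl_inj) -lex0 h2.
  subst a.
  exists \bot, \top; split => // z; case: ata => _ /(_ z (lex1 z)) //.
- move=> gac.
  have atc := @atom_b _ _ _ _ H _ _ a0 c0 gac.
  case: (boolP (b `&` c == \bot)) => [/eqP e | ne].
    have gbc : g a (b `|` c) = \top by rewrite gR gab gac meetx1.
    have bc0 : b `|` c <> \bot.
      by move=> e'; apply: b0; apply/eqP; rewrite -lex0 -e' leUl.
    have := @atom_b _ _ _ _ H _ _ a0 bc0 gbc; case=> _ /(_ b (leUl _ _)) [//|ebc].
    exfalso; apply: c0; apply/eqP; rewrite -lex0 -e lexI lexx andbT.
    by rewrite ebc leUr.
  case: atb => _ /(_ (b `&` c) (leIl _ _)) [e|eb]; first by move: ne; rewrite e eqxx.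
  case: atc => _ /(_ (b `&` c) (leIr _ _)) [e|ec]; first by move: ne; rewrite e eqxx.
  by rewrite -eb ec.
Qed.
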